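(* Let $w=a_{11}\cdots a_{1c_1}\,a_{21}\cdots a_{2c_2}\cdots a_{k1}\cdots a_{kc_k}$ be a column word with segments of lengths $c_1\ge c_2\ge\dots\ge c_k>0$. Then there exist positive integers $b_{ij}$ ($1\le i\le k$, $1\le j\le c_i$) such that $$w\sim^* b_{k1}b_{k-1,1}\cdots b_{11}b_{12}\cdots b_{1c_1}b_{22}\cdots b_{2c_2}\cdots b_{k2}\cdots b_{kc_k},$$ where $b_{11}>b_{21}>\dots>b_{k1}$ and $b_{11}\cdots b_{1c_1}\,|\,b_{22}\cdots b_{2c_2}\,|\cdots|\,b_{k2}\cdots b_{kc_k}$ is a column word (with segment lengths $c_1,c_2-1,\dots,c_k-1$, empty segments omitted).
   Context: A word is a finite sequence of positive integers. Twisted Knuth equivalence $\sim^*$ is the equivalence relation on words generated by: $u\,b\,a\,c\,v\sim^* u\,b\,c\,a\,v$ whenever $c\le b<a$, and $u\,a\,c\,b\,v\sim^* u\,c\,a\,b\,v$ whenever $c<b\le a$, for positive integers $a,b,c$ and arbitrary (possibly empty) words $u,v$. A column word is a word $a_{11}\cdots a_{1c_1}\,a_{21}\cdots a_{2c_2}\cdots a_{k1}\cdots a_{kc_k}$ (segments separated by $|$) with $c_1\ge c_2\ge\dots\ge c_k>0$ such that each segment is weakly decreasing ($a_{ij}\ge a_{i,j+1}$) and $a_{i+1,c_{i+1}-j}>a_{i,c_i-j}$ for all $0\le j<c_{i+1}$, $1\le i<k$. *)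

(* Defs.v *)
From mathcomp Require Import all_boot.
From Stdlib Require Import Relations.
Set Implicit Arguments. Unset Strict Implicit. Unset Printing Implicit Defensive.

Definition is_word (w : seq nat) : bool := all (fun x => 0 < x) w.

Inductive tk_step : seq nat -> seq nat -> Prop :=
| tk_rule1 (u v : seq nat) (a b c : nat) :
    is_word u -> is_word v -> 0 < a -> 0 < b -> 0 < c ->
    c <= b -> b < a ->
    tk_step (u ++ [:: b; a; c] ++ v) (u ++ [:: b; c; a] ++ v)
| tk_rule2 (u v : seq nat) (a b c : nat) :
    is_word u -> is_word v -> 0 < a -> 0 < b -> 0 < c ->
    c < b -> b <= a ->
    tk_step (u ++ [:: a; c; b] ++ v) (u ++ [:: c; a; b] ++ v).

Definition twisted_knuth_equiv : relation (seq nat) :=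
  clos_refl_sym_trans (seq nat) tk_step.

(* A column word, given by its list of segments [s_1; ...; s_k]:
   segment lengths c_1 >= ... >= c_k > 0, letters positive, each segment
   weakly decreasing, and a_{i+1, c_{i+1}-j} > a_{i, c_i - j} for
   0 <= j < c_{i+1}, i.e. comparing segments aligned at their right ends. *)
Definition is_column_word (ss : seq (seq nat)) : bool :=
  all is_word ss &&
  all (fun s => 0 < size s) ss &&
  sorted geq (map size ss) &&
  all (fun s => sorted geq s) ss &&
  [forall i : 'I_(size ss),
     (i.+1 < size ss) ==>
     [forall j : 'I_(size (nth [::] ss i.+1)),
        nth 0 (rev (nth [::] ss i)) j < nth 0 (rev (nth [::] ss i.+1)) j]].

Definition column_word_of (ss : seq (seq nat)) : seq nat := flatten ss.

(* Main.v *)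
Require Import Defs.
From mathcomp Require Import all_boot.
From mathcomp Require Import zify.
From Stdlib Require Import Relations.
Set Implicit Arguments. Unset Strict Implicit. Unset Printing Implicit Defensive.

Notation "x ~~* y" := (twisted_knuth_equiv x y) (at level 70).

Lemma is_word_cat u v : is_word (u ++ v) = is_word u && is_word v.
Proof. exact: all_cat. Qed.
Lemma is_word_cons a u : is_word (a :: u) = (0 < a) && is_word u.
Proof. by []. Qed.

Lemma tk_ctx x y u v : tk_step x y -> is_word u -> is_word v ->
  tk_step (u ++ x ++ v) (u ++ y ++ v).
Proof.
move=> [] u0 v0 a b c Wu0 Wv0 Ha Hb Hc H1 H2 Wu Wv.
- have := @tk_rule1 (u ++ u0) (v0 ++ v) a b c.
  rewrite -!catA /is_word !all_cat; apply=> //; apply/andP; split=> //.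
- have := @tk_rule2 (u ++ u0) (v0 ++ v) a b c.
  rewrite -!catA /is_word !all_cat; apply=> //; apply/andP; split=> //.
Qed.

Lemma eqv_ctx x y u v : x ~~* y -> is_word u -> is_word v ->
  u ++ x ++ v ~~* u ++ y ++ v.
Proof.
move=> H Wu Wv; elim: H.
- by move=> a b Hs; apply: rst_step; apply: tk_ctx.
- by move=> a; apply: rst_refl.
- by move=> a b _ IH; apply: rst_sym.
- by move=> a b c _ I1 _ I2; apply: rst_trans I2.
Qed.

Lemma eqv_trans x y z : x ~~* y -> y ~~* z -> x ~~* z.
Proof. exact: rst_trans. Qed.
Lemma eqv_sym x y : x ~~* y -> y ~~* x.
Proof. exact: rst_sym. Qed.
Lemma eqv_refl x : x ~~* x.
Proof. exact: rst_refl. Qed.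

Lemma eqv_r1 u v a b c : is_word u -> is_word v -> 0 < c -> c <= b -> b < a ->
  u ++ [:: b; c; a] ++ v ~~* u ++ [:: b; a; c] ++ v.
Proof.
move=> Wu Wv Hc H1 H2; apply: rst_sym; apply: rst_step; apply: tk_rule1 => //.
  by apply: leq_trans H2. by apply: leq_trans H1.
Qed.

Lemma eqv_r2 u v a b c : is_word u -> is_word v -> 0 < c -> c < b -> b <= a ->
  u ++ [:: a; c; b] ++ v ~~* u ++ [:: c; a; b] ++ v.
Proof.
move=> Wu Wv Hc H1 H2; apply: rst_step; apply: tk_rule2 => //.
  by apply: leq_trans H2; apply: leq_trans H1. by apply: leq_trans H1.
Qed.

Lemma moveA r c0 u v y : is_word u -> is_word v -> is_word (c0 :: r) ->
  sorted geq (c0 :: r) -> c0 < y ->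
  u ++ c0 :: r ++ y :: v ~~* u ++ c0 :: y :: r ++ v.
Proof.
elim: r c0 u => [|x r IH] c0 u Wu Wv Wr Sr Hy; first exact: eqv_refl.
move: Wr Sr => /= /and3P [Hc0 Hx Wr] /andP [Hxc Sr].
have IH' := IH x (u ++ [:: c0]).
rewrite -!catA /= in IH'.
have H1 : u ++ c0 :: x :: r ++ y :: v ~~* u ++ c0 :: x :: y :: r ++ v.
  apply: IH' => //.
  - by rewrite is_word_cat Wu /= Hc0.
  - by rewrite /= Hx.
  - by apply: leq_ltn_trans Hy.
apply: eqv_trans H1 _ => /=.
have := @eqv_r1 u (r ++ v) y c0 x Wu.
rewrite /=; apply => //.
by rewrite is_word_cat Wr Wv.
Qed.
Lemma perm_swap (a b : nat) s : perm_eq [:: a, b & s] [:: b, a & s].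
Proof. by rewrite -(cat1s a) -(cat1s b) perm_catCA. Qed.

Fixpoint ins (t : seq nat) (y : nat) : nat * seq nat :=
  match t with
  | [::] => (y, [::])
  | x :: r => if x < y then (x, y :: r) else let (b, r') := ins r y in (b, x :: r')
  end.

Lemma ins_props t y b t' : has (fun x => x < y) t -> ins t y = (b, t') ->
  [/\ b < y, b \in t, perm_eq (b :: t') (y :: t), size t' = size t &
      exists h r'', t' = h :: r'' /\ b < h /\ (h = y \/ h = head 0 t)].
Proof.
elim: t b t' => [//|x r IH] b t' /= Hh.
case: ifP => Hxy.
- move=> [<- <-]; split => //.
  + by rewrite inE eqxx.
  + exact: perm_swap.
  + by exists y, r; split=> //; split=> //; left.
- case E: (ins r y) => [b1 r1] [<- <-].
  rewrite Hxy /= in Hh.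
  have [H1 H2 H3 H4 [h [r'' [Er [Hbh Hh2]]]]] := IH _ _ Hh E.
  split => //.
  + by rewrite inE H2 orbT.
  + apply: perm_trans (perm_swap _ _ _) _.
    rewrite perm_sym; apply: perm_trans (perm_swap _ _ _) _.
    by rewrite perm_cons perm_sym.
  + by rewrite /= H4.
  + exists x, r1; split => //; split; last by right.
    by apply: leq_trans H1 _; rewrite leqNgt Hxy.
Qed.

Lemma ins_sorted t y b t' : sorted geq t -> has (fun x => x < y) t -> ins t y = (b, t') ->
  sorted geq t' /\ (forall x, x \in t -> x < y -> x <= b).
Proof.
elim: t b t' => [//|x r IH] b t' /= St Hh.
have Sr := path_sorted St.
have Ar : all (fun z => z <= x) r.
  have := order_path_min _ St. by apply; move=> p q w /= H1 H2; apply: leq_trans H2 H1.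
case: ifP => Hxy.
- move=> [<- <-]; split.
  + case: r St Sr Ar {Hh IH} => [//|z r] /= /andP [Hz Pz] _ /andP [Hzx _].
    by rewrite Pz andbT; apply: leq_trans Hzx (ltnW Hxy).
  + move=> z; rewrite inE => /orP [/eqP -> //|Hz _].
    by move/allP: Ar; apply.
- case E: (ins r y) => [b1 r1] [<- <-].
  rewrite Hxy /= in Hh.
  have [S1 M1] := IH _ _ Sr Hh E.
  have [_ _ _ _ [h [r'' [Er [Hbh Hh2]]]]] := ins_props Hh E.
  split.
  + move: S1; rewrite Er /= => ->; rewrite andbT.
    case: Hh2 => ->; first by rewrite leqNgt Hxy.
    by case: r {Sr IH Hh E M1 Er} St Ar => [//|z r] /= /andP [].
  + move=> z; rewrite inE => /orP [/eqP ->|Hz Hzy]; first by rewrite Hxy.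
    exact: M1.
Qed.

Lemma ins_word t y b t' : is_word t -> 0 < y -> has (fun x => x < y) t -> ins t y = (b, t') ->
  is_word t' /\ 0 < b.
Proof.
move=> Wt Hy Hh E; have [_ Hb P _ _] := ins_props Hh E.
have := perm_all (fun z => 0 < z) P; move: Wt; rewrite /is_word /= Hy => -> /andP [-> ->]; done.
Qed.

Lemma ins_mono t y b t' y' : has (fun x => x < y) t -> ins t y = (b, t') -> y < y' ->
  b < (ins t' y').1.
Proof.
elim: t b t' => [//|x r IH] b t' /= Hh.
case: ifP => Hxy.
- move=> [<- <-] Hy /=. by rewrite Hy.
- case E: (ins r y) => [b1 r1] [<- <-] Hy /=.
  rewrite Hxy /= in Hh.
  have [H1 _ _ _ _] := ins_props Hh E.
  case: ifP => _.
  + by apply: leq_trans H1 _; rewrite leqNgt Hxy.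
  + case E2: (ins r1 y') => [b2 r2] /=.
    by have := IH _ _ Hh E Hy; rewrite E2.
Qed.

Lemma ins_equiv t u v y b t' : is_word u -> is_word v -> is_word t -> 0 < y ->
  sorted geq t -> has (fun x => x < y) t -> ins t y = (b, t') ->
  u ++ t ++ y :: v ~~* u ++ b :: t' ++ v.
Proof.
elim: t u b t' => [//|x r IH] u b t' Wu Wv Wt Hy St Hh /=.
move: (Wt); rewrite is_word_cons => /andP [Hx Wr].
have Sr := path_sorted St.
case: ifP => Hxy.
- move=> [<- <-]; exact: moveA.
- case E: (ins r y) => [b1 r1] [<- <-].
  rewrite /= Hxy /= in Hh.
  have H1 := IH (u ++ [:: x]) _ _ _ Wv Wr Hy Sr Hh E.
  rewrite -!catA /= in H1.
  apply: eqv_trans (H1 _) _; first by rewrite is_word_cat Wu /= Hx.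
  have [Hb _ _ _ [h [r'' [Er [Hbh Hh2]]]]] := ins_props Hh E.
  have [_ Hb0] := ins_word Wr Hy Hh E.
  rewrite Er /=.
  have := @eqv_r2 u (r'' ++ v) x h b1 Wu; rewrite /=; apply => //.
  + have [W1 _] := ins_word Wr Hy Hh E. rewrite Er /= in W1.
    by case/andP: W1 => _ W1; rewrite is_word_cat W1.
  + case: Hh2 => ->; first by rewrite leqNgt Hxy.
    by case: r {Sr IH Hh E Er Wr H1 Wt} St => [//|z r] /= /andP [].
Qed.

Definition cwc (a b : seq nat) : Prop :=
  forall x, count (fun y => y <= x) b <= count (fun y => y < x) a.

Lemma cnt_strict y u : y \in u -> count (fun z => z < y) u < count (fun z => z <= y) u.
Proof.
elim: u => [//|z u IH]; rewrite inE /= => /orP [/eqP ->|Hy].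
- rewrite ltnn leqnn /= add1n ltnS add0n; apply: sub_count => w /=; exact: ltnW.
- have := IH Hy; case: (ltngtP z y) => _ /=; lia.
Qed.

Lemma cw_ins t y b t' u u' e : sorted geq t -> has (fun x => x < y) t -> ins t y = (b, t') ->
  cwc t u -> y \in u -> y < e ->
  (forall x, count (fun z => z <= x) u' + (y <= x) <= count (fun z => z <= x) u + (e <= x)) ->
  cwc t' u'.
Proof.
move=> St Hh E Ctu Yu Hye Hu' x.
have [Hby Hbt P _ _] := ins_props Hh E.
have [_ Mx] := ins_sorted St Hh E.
have HP := (permP P) (fun z => z < x); rewrite /= in HP.
have H1 := Hu' x. have H3 := Ctu x.
case: (ltngtP y x) => Hyx.
- have Hbx : b < x by apply: ltn_trans Hyx.
  rewrite Hbx Hyx (ltnW Hyx) /= in HP H1.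
  case: (e <= x) H1 => /= H1; lia.
- rewrite [y <= x]leqNgt Hyx /= in H1.
  rewrite [y < x]ltnNge (ltnW Hyx) /= in HP.
  have He : (e <= x) = false by apply/negbTE; rewrite -ltnNge; apply: ltn_trans Hye.
  rewrite He /= in H1.
  case Hbx: (b < x) HP => /= HP; last by lia.
  have C1 : count (fun z => z <= x) u <= count (fun z => z < y) u.
    by apply: sub_count => z /= Hz; apply: leq_ltn_trans Hyx.
  have C2 := cnt_strict Yu.
  have C3 := Ctu y.
  have C4 : count (fun z => z < y) t = count (fun z => z < x) t.
    apply: eq_in_count => z Hz /=; apply/idP/idP => Hz2.
    + by apply: leq_ltn_trans Hbx; apply: Mx.
    + by apply: ltn_trans Hyx.
  lia.
- subst x; rewrite leqnn ltnn Hby /= in HP H1.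
  rewrite [e <= y]leqNgt Hye /= in H1; lia.
Qed.

Lemma mem_le_sumn y b : y \in b -> y <= sumn b.
Proof.
elim: b => [//|z b IH]; rewrite inE /= => /orP [/eqP ->|H]; first exact: leq_addr.
by apply: leq_trans (IH H) _; apply: leq_addl.
Qed.

Lemma cwc_size a b : cwc a b -> size b <= size a.
Proof.
move=> H; have := H (sumn b).
rewrite (@eq_in_count _ _ predT); last by move=> z Hz /=; apply: mem_le_sumn.
by rewrite count_predT => /leq_trans; apply; apply: count_size.
Qed.

Lemma cwc_behead a b : sorted geq a -> cwc a b -> size b < size a -> cwc (behead a) b.
Proof.
case: a => [|h a]; first by move=> _ _; rewrite ltn0.
move=> Sa H Hs x; rewrite /= in Sa Hs *.
have := H x; rewrite /=.
case Hh: (h < x) => /=; last by rewrite add0n.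
move=> _.
have Aa : all (fun z => z <= h) a.
  have := order_path_min _ Sa. by apply; move=> p q w /= H1 H2; apply: leq_trans H2 H1.
rewrite [X in _ <= X](@eq_in_count _ _ predT).
  by rewrite count_predT; apply: leq_trans (count_size _ _) _; rewrite -ltnS.
move=> z Hz /=; apply: leq_ltn_trans Hh; by move/allP: Aa; apply.
Qed.

Fixpoint chainP (r : seq nat -> seq nat -> Prop) (ss : seq (seq nat)) : Prop :=
  match ss with
  | a :: ss' => match ss' with b :: _ => r a b /\ chainP r ss' | [::] => True end
  | [::] => True end.

Definition flipr (r : seq nat -> seq nat -> Prop) a b := r b a.

Fixpoint passr (rcs : seq (seq nat)) (y : nat) : nat * seq (seq nat) :=
  match rcs with
  | [::] => (y, [::])
  | t :: rcs' => let (b, t') := ins t y in let (z, rcs'') := passr rcs' b in (z, t' :: rcs'')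
  end.

Lemma word_flatten ss : all is_word ss -> is_word (flatten ss).
Proof. elim: ss => [//|s ss IH] /= /andP [H1 H2]; by rewrite is_word_cat H1 IH. Qed.

Lemma ins_count t y b t' : has (fun x => x < y) t -> ins t y = (b, t') ->
  forall x, count (fun w => w <= x) t' + (b <= x) <= count (fun w => w <= x) t + (y <= x).
Proof.
move=> Hh E x; have [_ _ P _ _] := ins_props Hh E.
have := (permP P) (fun w => w <= x); rewrite /= => HP; lia.
Qed.

Lemma passr_props rcs y u u' e z rcs'' :
  all (sorted geq) rcs -> all is_word rcs -> chainP (flipr cwc) (u :: rcs) ->
  y \in u -> y < e -> 0 < y ->
  (forall x, count (fun w => w <= x) u' + (y <= x) <= count (fun w => w <= x) u + (e <= x)) ->
  passr rcs y = (z, rcs'') ->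
  map size rcs'' = map size rcs /\ all (sorted geq) rcs'' /\ all is_word rcs'' /\
      chainP (flipr cwc) (u' :: rcs'') /\ 0 < z /\
      (forall U V, is_word U -> is_word V ->
          U ++ flatten (rev rcs) ++ y :: V ~~* U ++ z :: flatten (rev rcs'') ++ V) /\
      (forall y', y < y' -> z < (passr rcs'' y').1).
Proof.
elim: rcs y u u' e z rcs'' => [|t rcs IH] y u u' e z rcs''.
  move=> _ _ _ _ _ Hy _ [<- <-]; do 5 (split => //).
  by split=> // U V _ _; apply: eqv_refl.
move=> /= /andP [St Sr] /andP [Wt Wr] [Ctu Ch] Yu Hye Hy Hu'.
have Hh : has (fun x => x < y) t.
  rewrite has_count; apply: leq_trans (Ctu y).
  by rewrite -has_count; apply/hasP; exists y.
case E: (ins t y) => [b t'].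
case E2: (passr rcs b) => [z1 r1] [<- <-].
have [Hby Hbt P Hsz _] := ins_props Hh E.
have [St' _] := ins_sorted St Hh E.
have [Wt' Hb] := ins_word Wt Hy Hh E.
have Hc : forall x, count (fun w => w <= x) t' + (b <= x) <= count (fun w => w <= x) t + (y <= x).
  move=> x; have := (permP P) (fun w => w <= x); rewrite /= => HP; lia.
have [I1 [I2 [I3 [I4 [I5 [I6 I7]]]]]] := IH b t t' y z1 r1 Sr Wr Ch Hbt Hby Hb Hc E2.
split; [|split; [|split; [|split; [|split; [|split]]]]] => //.
- by rewrite /= Hsz I1.
- by rewrite /= St' I2.
- by rewrite /= Wt' I3.
- split => //; rewrite /flipr; exact: cw_ins St Hh E Ctu Yu Hye Hu'.
- move=> U V WU WV.
  rewrite !rev_cons !flatten_rcons -!catA.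
  have WF : is_word (flatten (rev rcs)) by apply: word_flatten; rewrite all_rev.
  have H1 : U ++ flatten (rev rcs) ++ t ++ y :: V ~~* U ++ flatten (rev rcs) ++ b :: t' ++ V.
    have := @ins_equiv t (U ++ flatten (rev rcs)) V y b t' _ WV Wt Hy St Hh E.
    by rewrite -!catA; apply; rewrite is_word_cat WU WF.
  apply: eqv_trans H1 _.
  have := I6 U (t' ++ V) WU _; rewrite -?catA; apply.
  by rewrite is_word_cat Wt' WV.
- move=> y' Hy' /=.
  case E3: (ins t' y') => [b' t2]; case E4: (passr r1 b') => [z' r2] /=.
  have := ins_mono Hh E Hy'; rewrite E3 /= => Hbb.
  by have := I7 _ Hbb; rewrite E4.
Qed.

Lemma chainP_rcons r l a b :
  chainP r (rcons (rcons l a) b) <-> chainP r (rcons l a) /\ r a b.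
Proof.
elim: l => [|x l IH] /=; first by split => [[H _]|[_ H]].
case: l IH => [|y l] /= IH.
  by split => [[H1 [H2 _]]|[[H1 _] H2]].
rewrite IH; tauto.
Qed.

Lemma chainP_rev r l : chainP r (rev l) <-> chainP (flipr r) l.
Proof.
elim: l => [//|a l IH]; case: l IH => [//|b l] IH.
rewrite rev_cons (rev_cons b) chainP_rcons -rev_cons IH /=; rewrite /flipr; tauto.
Qed.

Lemma chainP_equiv (A : pred (seq nat)) (P Q : seq nat -> seq nat -> Prop) l :
  all A l -> (forall a b, A a -> A b -> (P a b <-> Q a b)) -> (chainP P l <-> chainP Q l).
Proof.
move=> HA HPQ; elim: l HA => [//|a l IH] /= /andP [Aa Al].
case: l IH Al => [//|b l] IH Al; have Ab := Al; move: Ab => /= /andP [Ab _].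
move: (IH Al) (HPQ a b Aa Ab) => /= H1 H2; tauto.
Qed.

Lemma chainP_and (P Q : seq nat -> seq nat -> Prop) l :
  chainP (fun a b => P a b /\ Q a b) l <-> chainP P l /\ chainP Q l.
Proof.
elim: l => [//|a l IH] /=; case: l IH => [//|b l] IH; move: IH => /= IH; tauto.
Qed.

Lemma chainP_nth (P : seq nat -> seq nat -> Prop) l :
  (forall i, i.+1 < size l -> P (nth [::] l i) (nth [::] l i.+1)) <-> chainP P l.
Proof.
elim: l => [|a l IH] /=; first by split.
case: l IH => [|b l] IH; first by split => // _ [].
rewrite -IH /=; split.
- move=> H; split; first exact: (H 0).
  by move=> i Hi; apply: (H i.+1).
- by move=> [H1 H2] [|i] Hi //; apply: H2.
Qed.

Lemma sorted_size l : sorted geq (map size l) <-> chainP (fun a b => size b <= size a) l.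
Proof.
elim: l => [//|a l IH] /=; case: l IH => [//|b l] IH.
move: IH => /= IH.
split => [/andP [H1 H2]|[H1 H2]]; first by split => //; apply/IH.
by rewrite H1 /=; apply/IH.
Qed.

Lemma cnt0 (p : pred nat) s : all (fun z => ~~ p z) s -> count p s = 0.
Proof. by elim: s => [//|z s IH] /= /andP [/negbTE -> /IH ->]. Qed.

Lemma inc_iff ra rb : sorted leq ra -> sorted leq rb ->
  ((size rb <= size ra) /\ (forall j, j < size rb -> nth 0 ra j < nth 0 rb j)) <->
  (forall x, count (fun y => y <= x) rb <= count (fun y => y < x) ra).
Proof.
elim: rb ra => [|b0 rb IH] ra Sa Sb.
  by split => // _; split => //.
have Ab : all (leq b0) rb by apply: order_path_min Sb; apply: leq_trans.
case: ra Sa => [|a0 ra] Sa.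
  split; first by case.
  by move/(_ b0); rewrite /= leqnn.
have Aa : all (leq a0) ra by apply: order_path_min Sa; apply: leq_trans.
have IH' := IH ra (path_sorted Sa) (path_sorted Sb).
split.
- move=> [Hs Hn] x /=.
  have [H1 H2] : size rb <= size ra /\ (forall j, j < size rb -> nth 0 ra j < nth 0 rb j).
    by split => // j Hj; apply: (Hn j.+1).
  have Hc := (proj1 IH') (conj H1 H2) x.
  have Hab := Hn 0 isT; rewrite /= in Hab.
  case: (leqP b0 x) => Hbx /=.
  + by rewrite (leq_trans Hab Hbx) /= add1n ltnS.
  + rewrite cnt0 //; apply/allP => z Hz; rewrite -ltnNge.
    by apply: leq_trans Hbx _; move/allP: Ab; apply.
- move=> H.
  have Hab : a0 < b0.
    rewrite ltnNge; apply/negP => Hba.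
    have := H b0; rewrite /= leqnn ltnNge Hba /= (@cnt0 _ ra) //.
    by apply/allP => z Hz; rewrite -leqNgt; apply: leq_trans Hba _; move/allP: Aa; apply.
  have Hr : forall x, count (fun y => y <= x) rb <= count (fun y => y < x) ra.
    move=> x; case: (leqP b0 x) => Hbx.
    + by have := H x; rewrite /= Hbx (leq_trans Hab Hbx) /= !add1n ltnS.
    + rewrite cnt0 //; apply/allP => z Hz; rewrite -ltnNge.
      by apply: leq_trans Hbx _; move/allP: Ab; apply.
  have [H1 H2] := (proj2 IH') Hr.
  split => /=; first by [].
  by case => [|j] Hj //=; apply: H2.
Qed.

Definition relP (a b : seq nat) : Prop :=
  forall j, j < size b -> nth 0 (rev a) j < nth 0 (rev b) j.

Lemma cwc_iff a b : sorted geq a -> sorted geq b ->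
  (size b <= size a /\ relP a b) <-> cwc a b.
Proof.
move=> Sa Sb.
have Sra : sorted leq (rev a) by rewrite rev_sorted.
have Srb : sorted leq (rev b) by rewrite rev_sorted.
have I := inc_iff Sra Srb; rewrite !size_rev in I.
split => [H x|H].
- by have := (proj1 I) H x; rewrite !count_rev.
- by apply: (proj2 I) => x; rewrite !count_rev; exact: H.
Qed.

Definition CWP ss := [&& all is_word ss, all (fun s => 0 < size s) ss & all (sorted geq) ss]
  /\ chainP cwc ss.

Lemma cw_iff ss : is_column_word ss <-> CWP ss.
Proof.
have E : all (sorted geq) ss ->
  (chainP (fun a b => size b <= size a /\ relP a b) ss <-> chainP cwc ss).
  move=> S; exact: (@chainP_equiv (fun s => sorted geq s) _ _ _ S (fun a b Sa Sb => cwc_iff Sa Sb)).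
rewrite /is_column_word -!andbA /CWP; split.
- move/and5P => [W N Sz S F]; split; first by rewrite W N S.
  apply/(E S)/chainP_and; split; first exact/sorted_size.
  apply/chainP_nth => i Hi j Hj.
  move/forallP: F => /(_ (Ordinal (ltnW Hi))) /implyP /(_ Hi) /forallP /(_ (Ordinal Hj)).
  done.
- move=> [/and3P [W N S] C]; move/(E S)/chainP_and: C => [Csz Crel].
  rewrite W N S /=; apply/andP; split; first exact/sorted_size.
  apply/forallP => i; apply/implyP => Hi; apply/forallP => j.
  exact: (proj2 (chainP_nth _ _) Crel i Hi j (ltn_ord j)).
Qed.

Definition Lb (bs : seq (seq nat)) := head [::] bs :: map behead (behead bs).

Lemma chainP_tail r x l : chainP r (x :: l) -> chainP r l.
Proof. by case: l => [//|y l] /= []. Qed.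

Lemma all_pos_size (l1 l2 : seq (seq nat)) : map size l1 = map size l2 ->
  all (fun s : seq nat => 0 < size s) l1 = all (fun s : seq nat => 0 < size s) l2.
Proof.
move=> E; have := congr1 (all (fun n => 0 < n)) E.
by rewrite !all_map.
Qed.

Lemma CWP_rcons F y : CWP F -> F <> [::] -> is_word y -> 0 < size y -> sorted geq y ->
  cwc (last [::] F) y -> CWP (rcons F y).
Proof.
move=> [/and3P [W N S] C] HF Wy Ny Sy Cy; split.
  by rewrite !all_rcons W N S Wy Ny Sy.
case/lastP: F HF W N S C Cy => [//|F a] _ _ _ _ C.
rewrite last_rcons => Cy; apply/chainP_rcons; split => //.
Qed.

Definition Good (ss bs : seq (seq nat)) :=
  [/\ map size bs = map size ss, all is_word bs, sorted gtn (map (head 0) bs),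
      CWP [seq s <- Lb bs | 0 < size s] &
      flatten ss ~~* rev (map (head 0) bs) ++ flatten (map behead bs)] /\
  head 0 (last [::] bs) = (passr (behead (rev ss)) (head 0 (last [::] ss))).1 /\
  behead (last [::] bs) = behead (last [::] ss).

Lemma main n : forall ss, size ss = n.+1 -> CWP ss -> exists bs, Good ss bs.
Proof.
elim: n => [|n IH] ss.
  case: ss => [//|s [|//]] _ Hc; exists [:: s].
  move: (Hc) => [/and3P [/= /andP [Ws _] /andP [Ns _] _] _].
  split; last by split.
  split => //=.
  + by rewrite andbT.
  + by rewrite Ns.
  + by case: s Ws Ns {Hc} => [//|h s] _ _ /=; rewrite cats0; apply: eqv_refl.
case/lastP: ss => [//|init s]; rewrite size_rcons => -[Hsz] Hc.
move: (Hc) => [/and3P [W N S] C].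
rewrite !all_rcons in W N S.
case/andP: W => Ws Wi; case/andP: N => Ns Ni; case/andP: S => Ss Si.
have Cr : chainP (flipr cwc) (s :: rev init).
  by apply/chainP_rev; rewrite rev_cons revK.
case Er: (rev init) Cr => [|t rest] Cr.
  by move: Hsz; rewrite -size_rev Er.
clear C; case: s Ws Ns Ss Cr Hc => [//|h s'] Ws Ns Ss Cr Hc.
set s := h :: s'.
move: Cr => [Cts Crest]; rewrite /flipr in Cts.
have Wr : all is_word (t :: rest) by rewrite -Er all_rev.
have Sr : all (sorted geq) (t :: rest) by rewrite -Er all_rev.
have Nr : all (fun s : seq nat => 0 < size s) (t :: rest) by rewrite -Er all_rev.
move: (Wr) (Sr) => /andP [Wt Wrest] /andP [St Srest].
have Hh0 : 0 < h by case/andP: Ws.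
have Hh : has (fun x => x < h) t.
  rewrite has_count; apply: leq_trans (Cts h).
  by rewrite /= leqnn.
case E1: (ins t h) => [b t']; case E2: (passr rest b) => [z rest'].
have Ef : passr (t :: rest) h = (z, t' :: rest') by rewrite /= E1 E2.
have Hcs : forall x, count (fun w => w <= x) s' + (h <= x) <= count (fun w => w <= x) s + (h.+1 <= x).
  by move=> x /=; rewrite [_ + (h <= x)]addnC; apply: leq_addr.
have [P1 [P2 [P3 [P4 [P5 [P6 P7]]]]]] :=
  @passr_props (t :: rest) h s s' h.+1 z (t' :: rest') Sr Wr (conj Cts Crest)
    (mem_head _ _) (ltnSn _) Hh0 Hcs Ef.
have [Hbh Hbt Pb Hszt [h' [r'' [Et' [Hbh' _]]]]] := ins_props Hh E1.
have Hb0 : 0 < b by have [_ ->] := ins_word Wt Hh0 Hh E1.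
have Hcb := ins_count Hh E1.
have [_ [_ [_ [_ [_ [_ Q7]]]]]] :=
  @passr_props rest b t t' h z rest' Srest Wrest Crest Hbt Hbh Hb0 Hcb E2.
set init' := rev (t' :: rest').
have Hszi : size init' = n.+1.
  by rewrite size_rev -(size_map size) P1 size_map -Er size_rev.
have CWi : CWP init'.
  split; last by apply/chainP_rev; exact: chainP_tail P4.
  by rewrite !all_rev P2 P3 (all_pos_size P1) Nr.
have [bs' [[B1 B2 B3 B4 B5] [B6 B7]]] := IH _ Hszi CWi.
have Lt : last [::] init' = t' by rewrite /init' rev_cons last_rcons.
have Ri : behead (rev init') = rest' by rewrite /init' revK.
rewrite Lt Ri in B6; rewrite Lt in B7.
have Hz : z < head 0 (last [::] bs') by rewrite B6; apply: Q7; rewrite Et'.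
have Ei : init = rev (t :: rest) by rewrite -Er revK.
have Ws' : is_word s' by case/andP: Ws.
exists (rcons bs' (z :: s')); split; last first.
  rewrite !last_rcons /=; split => //.
  by rewrite rev_rcons /= Er Ef.
case: bs' B1 B2 B3 B4 B5 B6 B7 Hz => [|a l] B1 B2 B3 B4 B5 B6 B7 Hz.
  by move: (congr1 size B1); rewrite size_map size_map Hszi.
split.
- rewrite map_rcons B1 map_rcons /init' Ei !map_rev P1 //.
- by rewrite all_rcons B2 andbT is_word_cons P5 Ws'.
- move: B3 => /= B3; rewrite map_rcons /= rcons_path B3 /= last_map; exact: Hz.
- have ELb : Lb (rcons (a :: l) (z :: s')) = rcons (Lb (a :: l)) s' by rewrite /Lb /= map_rcons.
  rewrite ELb filter_rcons.
  case Hs': (0 < size s'); last exact: B4.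
  have St' : sorted geq t' by case/andP: P2.
  have Wt' : is_word t' by case/andP: P3.
  have Ct's : cwc t' s' by case: P4.
  have [Lm [lastL [EL [NL [WL [SL CL]]]]]] : exists Lm lastL, Lb (a :: l) = rcons Lm lastL /\
      0 < size lastL /\ is_word lastL /\ sorted geq lastL /\ cwc lastL s'.
    case: l B1 B6 B7 {B2 B3 B4 B5 Hz ELb} => [|c l] B1 B6 B7.
    + have Er' : rest' = [::].
        move: (congr1 size B1); rewrite /init' size_map size_map size_rev /=.
        by case: rest' {B1 B6 Q7 P1 P2 P3 P4 P6 P7 Ef E2 Ri Lt CWi Hszi init'}.
      rewrite Er' /= in B6 B7.
      have Ea : a = t'.
        move: B1; rewrite /init' Er' /= => -[Hsa].
        rewrite Et' /= in B6 B7 Hsa *.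
        by case: a B6 B7 Hsa => [//|a0 a1] /= -> ->.
      exists [::], a; rewrite Ea; split => //; split; first by rewrite Et'.
      by split.
    + exists (belast a (map behead (c :: l))), (behead t').
      have E := lastI a (map behead (c :: l)).
      rewrite [last a _]/= last_map in E.
      have B7' : behead (last c l) = behead t' by exact: B7.
      split; first by rewrite -B7'; exact: E.
      have Hst : size s' < size t'.
        have := cwc_size Cts; rewrite Hszt /= => Hle; exact: Hle.
      split; first by move: Hst; rewrite Et' /= ltnS => Hst; exact: leq_trans Hs' Hst.
      move: Wt' St'; rewrite Et' /= => /andP [_ ->] Sh; split => //; split; first exact: path_sorted Sh.
      have := @cwc_behead (h' :: r'') s' _ _ _; apply => //; by rewrite -Et'.
  rewrite EL filter_rcons NL in B4 *.
  apply: CWP_rcons => //.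
  + by case: [seq _ <- Lm | _].
  + exact: path_sorted Ss.
  + by rewrite last_rcons.
- rewrite flatten_rcons map_rcons rev_rcons map_rcons flatten_rcons.
  have H1 := P6 [::] s' isT Ws'.
  have Wz : is_word [:: z] by rewrite /is_word /= P5.
  have H2 := @eqv_ctx _ _ [:: z] s' B5 Wz Ws'.
  rewrite Ei /s; apply: eqv_trans H1 _.
  by move: H2; rewrite /= -!catA.
Qed.

Unset Implicit Arguments.
Theorem lemma4p4 (ss : seq (seq nat)) :
  is_column_word ss ->
  exists bs : seq (seq nat),
    [/\ map size bs = map size ss,
        all is_word bs,
        sorted gtn (map (head 0) bs),
        is_column_word
          [seq s <- head [::] bs :: map behead (behead bs) | 0 < size s]
      & twisted_knuth_equiv (flatten ss)
          (rev (map (head 0) bs) ++ flatten (map behead bs))].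
Proof.
move=> /cw_iff H.
case Ess: (size ss) => [|n].
  move/eqP: Ess; rewrite size_eq0 => /eqP ->; exists [::]; split => //.
    by apply/cw_iff.
  exact: eqv_refl.
have [bs [[B1 B2 B3 B4 B5] _]] := main Ess H.
exists bs; split => //; exact/cw_iff.
Qed.
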